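(* Let $\mathbf{c},\mathbf{d}$ be (possibly empty) real parameter vectors such that the kernel $K(\mu,n)=\dfrac{(\mathbf{c}+\mu)_n}{(\mathbf{d}+\mu)_n}$ is sign regular of order $3$ on $(0,\infty)\times\mathbb{N}_0$. Let $\mathbf{a}_1,\mathbf{a}_2,\mathbf{b}_1,\mathbf{b}_2$ be positive parameter vectors, let $x>0$, and assume the hypergeometric series below converge with non-vanishing denominator. Let $\mathbf{a}=(\mathbf{a}_1,\mathbf{a}_2)=(a_1,\dots,a_m)$ and $\mathbf{b}=(\mathbf{b}_1,\mathbf{b}_2)=(b_1,\dots,b_n)$ satisfy $m\le n$ and $$\frac{e_n(\mathbf{b})}{e_m(\mathbf{a})}\le\frac{e_{n-1}(\mathbf{b})}{e_{m-1}(\mathbf{a})}\le\dots\le\frac{e_{n-m+1}(\mathbf{b})}{e_1(\mathbf{a})}\le e_{n-m}(\mathbf{b}).$$ Then the function $$F(\mu)=\frac{{}_pF_q\!\left(\begin{matrix}\mathbf{c}+\mu,\ \mathbf{a}_1\\ \mathbf{d}+\mu,\ \mathbf{b}_1\end{matrix}\,\Big|\,x\right)}{{}_sF_t\!\left(\begin{matrix}\mathbf{c}+\mu,\ \mathbf{b}_2\\ \mathbf{d}+\mu,\ \mathbf{a}_2\end{matrix}\,\Big|\,x\right)}$$ is unimodal on $(0,\infty)$.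
   Context: For a vector $\mathbf{c}=(c_1,\dots,c_r)$, $(\mathbf{c}+\mu)_k=\prod_{i=1}^r(c_i+\mu)_k$ (equal to $1$ if $\mathbf{c}$ is empty), where $(y)_k=y(y+1)\cdots(y+k-1)$ is the Pochhammer symbol; similarly $(\mathbf{a})_k=\prod_i(a_i)_k$. ${}_pF_q$ denotes the generalized hypergeometric series $\sum_{k\ge0}\frac{(\text{top parameters})_k}{(\text{bottom parameters})_k}\frac{x^k}{k!}$, with $p$, $q$, $s$, $t$ the total numbers of top/bottom parameters. $e_j(\mathbf{a})$ is the $j$-th elementary symmetric polynomial of the entries of $\mathbf{a}$ ($e_0=1$). A kernel $K:X\times Y\to\mathbb{R}$ is sign regular of order $3$ if there are signs $\varepsilon_1,\varepsilon_2,\varepsilon_3\in\{\pm1\}$ with $\varepsilon_m\det(K(x_i,y_j))_{i,j=1}^m\ge0$ for $m=1,2,3$ and all $x_1<\dots<x_m$, $y_1<\dots<y_m$. A function is unimodal if it changes its direction of monotonicity at most once. *)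

(* Defs.v *)
From HB Require Import structures.
From mathcomp Require Import all_boot all_order all_algebra.
From mathcomp Require Import all_classical all_reals all_analysis.
Set Implicit Arguments. Unset Strict Implicit. Unset Printing Implicit Defensive.
Import Order.TTheory GRing.Theory Num.Theory numFieldNormedType.Exports.
Local Open Scope ring_scope.

Definition poch {R : numFieldType} (y : R) (k : nat) : R :=
  \prod_(i < k) (y + i%:R).

Definition vpoch {R : numFieldType} (c : seq R) (k : nat) : R :=
  \prod_(y <- c) poch y k.

Definition vshift {R : numFieldType} (c : seq R) (mu : R) : seq R :=
  [seq ci + mu | ci <- c].

Definition hypterm {R : numFieldType} (top bot : seq R) (x : R) (k : nat) : R :=
  vpoch top k / vpoch bot k * x ^+ k / (k`!)%:R.

Definition hypconv {R : realType} (top bot : seq R) (x : R) : Prop :=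
  cvgn (series (hypterm top bot x)).

Definition hypF {R : realType} (top bot : seq R) (x : R) : R :=
  limn (series (hypterm top bot x)).

Definition elem_sym {R : numFieldType} (s : seq R) (j : nat) : R :=
  \sum_(I : {set 'I_(size s)} | #|I| == j) \prod_(i in I) s`_i.

Definition sr_order {R : realType} (K : R -> nat -> R) (m : nat) (eps : R) : Prop :=
  forall (xs : 'I_m -> R) (ys : 'I_m -> nat),
    (forall i, 0 < xs i) ->
    (forall i j : 'I_m, (i < j)%N -> xs i < xs j) ->
    (forall i j : 'I_m, (i < j)%N -> (ys i < ys j)%N) ->
    0 <= eps * \det (\matrix_(i < m, j < m) K (xs i) (ys j)).

Definition sign_regular3 {R : realType} (K : R -> nat -> R) : Prop :=
  exists eps1 eps2 eps3 : R,
    [/\ eps1 = 1 \/ eps1 = -1, eps2 = 1 \/ eps2 = -1, eps3 = 1 \/ eps3 = -1 &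
      [/\ sr_order K 1 eps1, sr_order K 2 eps2 & sr_order K 3 eps3]].

(* f is unimodal on (0,oo): it changes its direction of monotonicity at most
   once (t <= 0 covers the globally monotone cases). *)
Definition unimodal_pos {R : realType} (f : R -> R) : Prop :=
  exists t : R,
    ((forall u v, 0 < u -> u <= v -> v <= t -> f u <= f v) /\
     (forall u v, 0 < u -> t <= u -> u <= v -> f v <= f u)) \/
    ((forall u v, 0 < u -> u <= v -> v <= t -> f v <= f u) /\
     (forall u v, 0 < u -> t <= u -> u <= v -> f u <= f v)).

(* Main.v *)
Require Import Defs.
From HB Require Import structures.
From mathcomp Require Import all_boot all_order all_algebra.
From mathcomp Require Import all_classical all_reals all_analysis.
From mathcomp Require Import ring lra.
Import Order.TTheory GRing.Theory Num.Theory numFieldNormedType.Exports.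
Local Open Scope ring_scope.
Section Main.
Variable R : realType.
Implicit Types s : seq R.

Lemma prod_shift s (t : R) : \prod_(y <- s) (y + t) =
  \sum_(j < (size s).+1) elem_sym s j * t ^+ (size s - j).
Proof.
rewrite (big_nth 0) big_mkord bigA_distr.
under eq_bigr => J _.
  rewrite (bigID (fun i => i \in J)) /=.
  rewrite (eq_bigr (fun i : 'I_(size s) => s`_i)); last by move=> i Hi; rewrite Hi.
  rewrite (eq_bigr (fun=> t : R)); last by move=> i Hi; rewrite (negbTE Hi).
  rewrite prodr_const.
  over.
rewrite /elem_sym.
under [RHS]eq_bigr => j _ do rewrite mulr_suml.
rewrite (exchange_big_dep xpredT) //=.
apply: eq_bigr => J _.
have Hc : (#|J| < (size s).+1)%N by rewrite ltnS (leq_trans (max_card _)) // card_ord.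
rewrite (big_pred1 (Ordinal Hc)); last by move=> j /=; rewrite eq_sym.
congr (_ * t ^+ _).
have HC := cardC (mem J); rewrite card_ord in HC.
have -> : (size s - Ordinal Hc = #|predC (mem J)|)%N.
  by rewrite /= -{1}HC addKn.
by apply: eq_card => i; rewrite !inE.
Qed.

Lemma elem_sym_ge0 s j : all (fun y => 0 <= y) s -> 0 <= elem_sym s j.
Proof.
move=> /allP H; apply: sumr_ge0 => I _; apply: prodr_ge0 => i _.
apply: H; exact: mem_nth.
Qed.

Lemma elem_sym_gt0 s j : all (fun y => 0 < y) s -> (j <= size s)%N -> 0 < elem_sym s j.
Proof.
move=> /allP H hj.
rewrite /elem_sym (bigD1 [set widen_ord hj i | i : 'I_j]) /=; last first.
  by rewrite card_imset ?card_ord //; by move=> u v /(congr1 val) /= /val_inj.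
apply: ltr_pwDl.
  apply: prodr_gt0 => i _; apply: H; exact: mem_nth.
apply: sumr_ge0 => I _; apply: prodr_ge0 => i _; apply: ltW; apply: H; exact: mem_nth.
Qed.

Lemma descartes (n : nat) (c : nat -> R) (t t' : R) :
  (forall i, (i < n)%N -> 0 <= c i -> 0 <= c i.+1) ->
  0 <= t -> t <= t' ->
  0 < \sum_(i < n.+1) c i * t ^+ i -> 0 < \sum_(i < n.+1) c i * t' ^+ i.
Proof.
move=> Hup t0 tt' Hpos.
have [<- //|tne] := eqVneq t t'.
have tlt : t < t' by rewrite lt_neqAle tne.
have t'0 : 0 < t' by apply: le_lt_trans tlt.
pose j0 := find (fun i => 0 <= c i) (iota 0 n.+1).
have Hbef : forall i, (i < j0)%N -> c i < 0.
  move=> i hi; have := before_find 0%N hi.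
  have hin : (i < n.+1)%N.
    by rewrite -(size_iota 0 n.+1); apply: leq_trans hi (find_size _ _).
  rewrite nth_iota // add0n => /negbT; by rewrite -ltNge.
have Hup2 : forall i i', (i <= i')%N -> (i' <= n)%N -> 0 <= c i -> 0 <= c i'.
  move=> i i' hii'; elim: i' hii' => [|i' IH] hii' hi'n.
    by rewrite leqn0 in hii'; move/eqP: hii' => ->.
  rewrite leq_eqVlt in hii'; case/orP: hii' => [/eqP -> //|hii'].
  by move=> ci; apply: Hup => //; apply: IH => //; apply: ltnW.
have Haft : forall i, (j0 <= i)%N -> (i <= n)%N -> 0 <= c i.
  move=> i hi hin.
  have hj0 : (j0 < size (iota 0 n.+1))%N by rewrite size_iota (leq_ltn_trans hi).
  have hh : has (fun i => 0 <= c i) (iota 0 n.+1) by rewrite has_find.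
  have := nth_find 0%N hh.
  rewrite -/j0 nth_iota; last by rewrite -(size_iota 0 n.+1).
  by rewrite add0n; apply: Hup2.
have key : forall i, (i < n.+1)%N ->
   c i * (t ^+ i * t' ^+ j0) <= c i * (t' ^+ i * t ^+ j0).
  move=> i hi; case: (ltnP i j0) => hij.
    rewrite ler_nM2l; last exact: Hbef.
    rewrite -(subnKC (ltnW hij)) !exprD mulrA (mulrC (t' ^+ i)) -mulrA.
    have t'0' : 0 <= t' by apply: ltW.
    apply: ler_wpM2l; first exact: exprn_ge0.
    apply: ler_wpM2l; first exact: exprn_ge0.
    by apply: lerXn2r.
  apply: ler_wpM2l; first by apply: Haft; rewrite // -ltnS.
  rewrite -(subnKC hij) !exprD.
  have t'0' : 0 <= t' by apply: ltW.
  have -> : t ^+ j0 * t ^+ (i - j0) * t' ^+ j0 = (t ^+ j0 * t' ^+ j0) * t ^+ (i - j0) by ring.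
  have -> : t' ^+ j0 * t' ^+ (i - j0) * t ^+ j0 = (t ^+ j0 * t' ^+ j0) * t' ^+ (i - j0) by ring.
  apply: ler_wpM2l; first by apply: mulr_ge0; exact: exprn_ge0.
  by apply: lerXn2r.
have Hsum : (\sum_(i < n.+1) c i * t ^+ i) * t' ^+ j0 <=
            (\sum_(i < n.+1) c i * t' ^+ i) * t ^+ j0.
  rewrite !mulr_suml; apply: ler_sum => i _; rewrite -!mulrA; exact: key.
rewrite ltNge; apply/negP => Hle.
have : (\sum_(i < n.+1) c i * t ^+ i) * t' ^+ j0 <= 0.
  apply: (le_trans Hsum); apply: mulr_le0_ge0 => //; exact: exprn_ge0.
by rewrite leNgt (mulr_gt0 Hpos (exprn_gt0 _ t'0)).
Qed.
Implicit Types a b : seq R.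

Definition Pl s (t : R) := \prod_(y <- s) (y + t).

Lemma Pl_pow s t : Pl s t = \sum_(i < (size s).+1) elem_sym s (size s - i) * t ^+ i.
Proof.
rewrite /Pl prod_shift (reindex_inj rev_ord_inj) /=; apply: eq_bigr => i _.
by rewrite subSS subKn // -ltnS.
Qed.

Lemma D_coeffs a b t : (size a <= size b)%N ->
  Pl b t - Pl a t = \sum_(i < (size b).+1)
    (elem_sym b (size b - i) - (if (i <= size a)%N then elem_sym a (size a - i) else 0)) * t ^+ i.
Proof.
move=> hab; rewrite !Pl_pow (big_ord_widen (size b).+1 (fun i => elem_sym a (size a - i) * t ^+ i)) //.
rewrite [X in _ - X]big_mkcond /= -sumrB; apply: eq_bigr => i _.
by rewrite ltnS; case: ifP => _; rewrite mulrBl ?mul0r.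
Qed.

Lemma D_mono a b (k k' : R) :
  all (fun y => 0 < y) a -> all (fun y => 0 < y) b ->
  (size a <= size b)%N ->
  (forall k : nat, (k < size a)%N ->
     elem_sym b (size b - k) / elem_sym a (size a - k)
     <= elem_sym b (size b - k.+1) / elem_sym a (size a - k.+1)) ->
  0 <= k -> k <= k' -> 0 < Pl b k - Pl a k -> 0 < Pl b k' - Pl a k'.
Proof.
move=> Ha Hb hab Hr k0 kk'; rewrite !D_coeffs //.
apply: (@descartes (size b) (fun i => elem_sym b (size b - i) - (if (i <= size a)%N then elem_sym a (size a - i) else 0)) k k') => // i hi.
have Hb0 : forall j, 0 <= elem_sym b j.
  by move=> j; apply: elem_sym_ge0; apply/allP => y /(allP Hb) /ltW.
case: (leqP i.+1 (size a)) => hia; last first.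
  by move=> _ /=; rewrite subr0.
rewrite /= (ltnW hia) !subr_ge0 => H.
have Ha1 : 0 < elem_sym a (size a - i) by apply: elem_sym_gt0 => //; apply: leq_subr.
have Ha2 : 0 < elem_sym a (size a - i.+1) by apply: elem_sym_gt0 => //; apply: leq_subr.
have := Hr i hia.
have H1 : 1 <= elem_sym b (size b - i) / elem_sym a (size a - i).
  by rewrite ler_pdivlMr // mul1r.
move=> H2; have := le_trans H1 H2.
by rewrite ler_pdivlMr // mul1r.
Qed.

Lemma poch_gt0 (y : R) k : 0 < y -> 0 < poch y k.
Proof. move=> y0; apply: prodr_gt0 => i _; apply: ltr_wpDr => //; exact: ler0n. Qed.

Lemma vpoch_gt0 s k : all (fun y => 0 < y) s -> 0 < vpoch s k.
Proof. move=> /allP H; rewrite /vpoch big_seq; apply: prodr_gt0 => y /H y0; exact: poch_gt0. Qed.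

Lemma vpochS s k : vpoch s k.+1 = vpoch s k * Pl s k%:R.
Proof.
rewrite /vpoch /Pl -big_split /=; apply: eq_bigr => y _.
by rewrite /poch big_ord_recr.
Qed.

Lemma vpoch_cat s1 s2 k : vpoch (s1 ++ s2) k = vpoch s1 k * vpoch s2 k.
Proof. by rewrite /vpoch big_cat. Qed.

Lemma Pl_gt0 s t : all (fun y => 0 < y) s -> 0 <= t -> 0 < Pl s t.
Proof. move=> /allP H t0; rewrite /Pl big_seq; apply: prodr_gt0 => y /H y0; exact: ltr_wpDr. Qed.

Lemma nondec_ind (f : nat -> R) i j : (forall k, (i <= k)%N -> (k < j)%N -> f k <= f k.+1) ->
  (i <= j)%N -> f i <= f j.
Proof.
elim: j => [|j IH] H hij; first by rewrite leqn0 in hij; move/eqP: hij => ->.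
rewrite leq_eqVlt in hij; case/orP: hij => [/eqP -> //|hij].
apply: le_trans (H j _ _) => //; apply: IH => // k hk hkj; apply: H => //; exact: ltnW.
Qed.

Lemma noninc_ind (f : nat -> R) i j : (forall k, (i <= k)%N -> (k < j)%N -> f k.+1 <= f k) ->
  (i <= j)%N -> f j <= f i.
Proof.
move=> H hij; have := @nondec_ind (fun k => - f k) i j.
by rewrite lerN2; apply => // k hk hkj; rewrite lerN2; apply: H.
Qed.

Definition rr a b (k : nat) := vpoch a k / vpoch b k.

Lemma rr_nodip a b i j l :
  all (fun y => 0 < y) a -> all (fun y => 0 < y) b ->
  (size a <= size b)%N ->
  (forall k : nat, (k < size a)%N ->
     elem_sym b (size b - k) / elem_sym a (size a - k)
     <= elem_sym b (size b - k.+1) / elem_sym a (size a - k.+1)) ->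
  (i <= j)%N -> (j <= l)%N -> rr a b j < rr a b i -> rr a b l <= rr a b j.
Proof.
move=> Ha Hb hab Hr hij hjl hlt.
have step : forall k, rr a b k.+1 = rr a b k * (Pl a k%:R / Pl b k%:R).
  move=> k; rewrite /rr !vpochS.
  have := @vpoch_gt0 b k Hb; have := @Pl_gt0 b k%:R Hb (ler0n R k).
  by move=> h1 h2; field; rewrite !gt_eqF.
have rpos : forall k, 0 < rr a b k by move=> k; apply: divr_gt0; apply: vpoch_gt0.
have down : forall k, (rr a b k.+1 < rr a b k) = (0 < Pl b k%:R - Pl a k%:R).
  move=> k; rewrite step gtr_pMr // subr_gt0 ltr_pdivrMr ?mul1r //.
  apply: Pl_gt0 => //; exact: ler0n.
have [k [hik hkj hk]] : exists k, [/\ (i <= k)%N, (k < j)%N & rr a b k.+1 < rr a b k].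
  apply/not_existsP => /= Hn.
  have : rr a b i <= rr a b j.
    apply: nondec_ind => // k hik hkj; rewrite leNgt; apply/negP => hk.
    by apply: (Hn k); split.
  by rewrite leNgt hlt.
rewrite down in hk.
apply: noninc_ind => // k' hjk' hk'l; apply: ltW; rewrite down.
apply: (@D_mono a b k%:R k'%:R Ha Hb hab Hr _ _ hk); first exact: ler0n.
rewrite ler_nat; apply: leq_trans (ltnW hkj) hjk'.
Qed.

Lemma sum3_0 (x y z : R) : 0 <= x -> 0 <= y -> 0 <= z -> x + y + z <= 0 -> [/\ x = 0, y = 0 & z = 0].
Proof. move=> *; split; lra. Qed.
Arguments sum3_0 {x y z}.

Lemma mul_eq0_r (x y : R) : 0 < x -> 0 <= y -> x * y = 0 -> y = 0.
Proof. move=> hx hy /eqP; rewrite mulf_eq0 (gt_eqF hx) /=; by move/eqP. Qed.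
Arguments mul_eq0_r {x y}.

Definition det3 (G : nat -> nat -> R) :=
  G 0 0 * (G 1 1 * G 2 2 - G 1 2 * G 2 1) - G 0 1 * (G 1 0 * G 2 2 - G 1 2 * G 2 0)
  + G 0 2 * (G 1 0 * G 2 1 - G 1 1 * G 2 0).

Definition minor2 (G : nat -> nat -> R) i i' j j' := G i j * G i' j' - G i j' * G i' j.

Definition vrow (G : nat -> nat -> R) i := - G i 0 + G i 1 - G i 2.

Lemma no_pattern (G : nat -> nat -> R) (e2 e3 sg : R) :
  (e2 = 1 \/ e2 = -1) -> (e3 = 1 \/ e3 = -1) -> sg = e2 * e3 ->
  (forall i j, (i < 3)%N -> (j < 3)%N -> 0 <= G i j) ->
  (forall i i' j j', (i < i')%N -> (i' < 3)%N -> (j < j')%N -> (j' < 3)%N ->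
     0 <= e2 * minor2 G i i' j j') ->
  0 <= e3 * det3 G ->
  0 < sg * vrow G 0 -> sg * vrow G 1 < 0 -> 0 < sg * vrow G 2 -> False.
Proof.
move=> He2 He3 Hsg Hpos Hmin Hdet Hv0 Hv1 Hv2.
have e22 : e2 * e2 = 1 by case: He2 => ->; ring.
have e33 : e3 * e3 = 1 by case: He3 => ->; ring.
have e2n : e2 != 0 by case: He2 => ->; rewrite ?oppr_eq0 oner_eq0.
pose w0 := sg * vrow G 0; pose w1 := - (sg * vrow G 1); pose w2 := sg * vrow G 2.
have w0p : 0 < w0 by [].
have w1p : 0 < w1 by rewrite oppr_gt0.
have w2p : 0 < w2 by [].
(* middle column expansion *)
have id1 : e3 * det3 G = - (w0 * (e2 * minor2 G 1 2 0 2)) - (w1 * (e2 * minor2 G 0 2 0 2))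
                          - (w2 * (e2 * minor2 G 0 1 0 2)).
  rewrite -[LHS]mul1r -{1}e22 /w0 /w1 /w2 Hsg /det3 /minor2 /vrow.
  ring.
have m01 : 0 <= e2 * minor2 G 1 2 0 2 by apply: Hmin.
have m11 : 0 <= e2 * minor2 G 0 2 0 2 by apply: Hmin.
have m21 : 0 <= e2 * minor2 G 0 1 0 2 by apply: Hmin.
have hs1 : w0 * (e2 * minor2 G 1 2 0 2) + w1 * (e2 * minor2 G 0 2 0 2) + w2 * (e2 * minor2 G 0 1 0 2) <= 0.
  by move: Hdet; rewrite id1; lra.
have [t0 t1 t2] := sum3_0 (mulr_ge0 (ltW w0p) m01) (mulr_ge0 (ltW w1p) m11)
    (mulr_ge0 (ltW w2p) m21) hs1.
have det0 : e3 * det3 G = 0 by rewrite id1 t0 t1 t2; ring.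
have id0 : - (e3 * det3 G) = (w0 * (e2 * minor2 G 1 2 1 2)) + (w1 * (e2 * minor2 G 0 2 1 2))
                          + (w2 * (e2 * minor2 G 0 1 1 2)).
  rewrite -[LHS]mul1r -{1}e22 /w0 /w1 /w2 Hsg /det3 /minor2 /vrow.
  ring.
have id2 : - (e3 * det3 G) = (w0 * (e2 * minor2 G 1 2 0 1)) + (w1 * (e2 * minor2 G 0 2 0 1))
                          + (w2 * (e2 * minor2 G 0 1 0 1)).
  rewrite -[LHS]mul1r -{1}e22 /w0 /w1 /w2 Hsg /det3 /minor2 /vrow.
  ring.
have [_ _ s0] := sum3_0 (mulr_ge0 (ltW w0p) (Hmin 1%N 2%N 1%N 2%N isT isT isT isT))
   (mulr_ge0 (ltW w1p) (Hmin 0%N 2%N 1%N 2%N isT isT isT isT))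
   (mulr_ge0 (ltW w2p) (Hmin 0%N 1%N 1%N 2%N isT isT isT isT)) ltac:(by rewrite -id0 det0 oppr0).
have [_ _ s2] := sum3_0 (mulr_ge0 (ltW w0p) (Hmin 1%N 2%N 0%N 1%N isT isT isT isT))
   (mulr_ge0 (ltW w1p) (Hmin 0%N 2%N 0%N 1%N isT isT isT isT))
   (mulr_ge0 (ltW w2p) (Hmin 0%N 1%N 0%N 1%N isT isT isT isT)) ltac:(by rewrite -id2 det0 oppr0).
have M20 : minor2 G 0 1 1 2 = 0.
  have := mul_eq0_r w2p (Hmin 0%N 1%N 1%N 2%N isT isT isT isT) s0.
  by move/eqP; rewrite mulf_eq0 (negbTE e2n) /= => /eqP.
have M22 : minor2 G 0 1 0 1 = 0.
  have := mul_eq0_r w2p (Hmin 0%N 1%N 0%N 1%N isT isT isT isT) s2.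
  by move/eqP; rewrite mulf_eq0 (negbTE e2n) /= => /eqP.
have M21 : minor2 G 0 1 0 2 = 0.
  have := mul_eq0_r w2p m21 t2.
  by move/eqP; rewrite mulf_eq0 (negbTE e2n) /= => /eqP.
have rel : forall k, (k < 3)%N -> w0 * G 1 k + w1 * G 0 k = 0.
  move=> k; case: k => [|[|[|//]]] _; rewrite /w0 /w1.
  - have -> : sg * vrow G 0 * G 1 0 + - (sg * vrow G 1) * G 0 0 = sg * (- minor2 G 0 1 0 1 + minor2 G 0 1 0 2)
      by rewrite /vrow /minor2; ring.
    by rewrite M22 M21; ring.
  - have -> : sg * vrow G 0 * G 1 1 + - (sg * vrow G 1) * G 0 1 = sg * (- minor2 G 0 1 0 1 + minor2 G 0 1 1 2)
      by rewrite /vrow /minor2; ring.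
    by rewrite M22 M20; ring.
  - have -> : sg * vrow G 0 * G 1 2 + - (sg * vrow G 1) * G 0 2 = sg * (- minor2 G 0 1 0 2 + minor2 G 0 1 1 2)
      by rewrite /vrow /minor2; ring.
    by rewrite M21 M20; ring.
have G0 : forall k, (k < 3)%N -> G 0 k = 0.
  move=> k hk; have := rel k hk.
  have h1 := mulr_ge0 (ltW w0p) (Hpos 1%N k isT hk).
  have h2 := mulr_ge0 (ltW w1p) (Hpos 0%N k isT hk).
  move=> h; apply: (mul_eq0_r w1p (Hpos 0%N k isT hk)); lra.
move: Hv0; rewrite /vrow !G0 //; lra.
Qed.
Lemma det2f (f : nat -> nat -> R) :
  \det (\matrix_(i < 2, j < 2) f i j) = f 0 0 * f 1 1 - f 0 1 * f 1 0.
Proof.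
rewrite (expand_det_row _ ord0) !big_ord_recr big_ord0 /= add0r /cofactor !det_mx11 !mxE /=.
rewrite !expr0 !expr1 !mul1r; ring.
Qed.

Lemma det2M (A : 'M[R]_2) : \det A = A 0 0 * A 1 1 - A 0 1 * A 1 0.
Proof.
rewrite (expand_det_row _ ord0) !big_ord_recr big_ord0 /= add0r /cofactor !det_mx11 !mxE /=.
rewrite !expr0 !expr1 !mul1r.
have -> : lift ord0 ord0 = 1 :> 'I_2 by apply: val_inj.
have -> : lift ord_max ord0 = 0 :> 'I_2 by apply: val_inj.
have -> : lift (widen_ord (leqnSn 1) ord_max) ord0 = 1 :> 'I_2 by apply: val_inj.
have -> : (widen_ord (leqnSn 1) ord_max) = 0 :> 'I_2 by apply: val_inj.
have -> : (ord_max : 'I_2) = 1 by apply: val_inj.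
ring.
Qed.

Lemma det3f (f : nat -> nat -> R) :
  \det (\matrix_(i < 3, j < 3) f i j) = det3 f.
Proof.
rewrite (expand_det_row _ ord0) !big_ord_recr big_ord0 /= add0r /cofactor.
rewrite !det2M !mxE /= /bump /=.
have h1 : (1 + 1 %% 2 = 2)%N by [].
have h2 : (0 + 1 %% 2 = 1)%N by [].
rewrite ?h1 ?h2 ?addn0 ?add0n ?addn1 !expr0 !expr1 /det3.
ring.
Qed.
Lemma sr2_fact (K : R -> nat -> R) e2 : sr_order K 2 e2 ->
  forall m0 m1 k0 k1, 0 < m0 -> m0 < m1 -> (k0 < k1)%N ->
  0 <= e2 * (K m0 k0 * K m1 k1 - K m0 k1 * K m1 k0).
Proof.
move=> H m0 m1 k0 k1 h0 h01 hk.
have := H (fun i => nth 0 [:: m0; m1] i) (fun j => nth 0%N [:: k0; k1] j).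
rewrite (det2f (fun i j => K (nth 0 [:: m0; m1] i) (nth 0%N [:: k0; k1] j))) /=; apply.
- by move=> [[|[|]]] //= _; apply: lt_trans h01.
- by move=> [[|[|]]] // ? [[|[|]]].
- by move=> [[|[|]]] // ? [[|[|]]].
Qed.

Lemma sr3_fact (K : R -> nat -> R) e3 : sr_order K 3 e3 ->
  forall m0 m1 m2 k0 k1 k2, 0 < m0 -> m0 < m1 -> m1 < m2 -> (k0 < k1)%N -> (k1 < k2)%N ->
  0 <= e3 * det3 (fun i j => K (nth 0 [:: m0; m1; m2] i) (nth 0%N [:: k0; k1; k2] j)).
Proof.
move=> H m0 m1 m2 k0 k1 k2 h0 h01 h12 hk01 hk12.
have := H (fun i => nth 0 [:: m0; m1; m2] i) (fun j => nth 0%N [:: k0; k1; k2] j).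
rewrite (det3f (fun i j => K (nth 0 [:: m0; m1; m2] i) (nth 0%N [:: k0; k1; k2] j))); apply.
- move=> [[|[|[|]]]] //= _; [exact: lt_trans h01| exact: lt_trans (lt_trans h01 h12)].
- move=> [[|[|[|]]]] // ? [[|[|[|]]]] //= ? _; by [| apply: lt_trans h12].
- move=> [[|[|[|]]]] // ? [[|[|[|]]]] //= ? _; by [| apply: ltn_trans hk12].
Qed.

Lemma det3_lin0 N (a : 'I_N -> R) (u : 'I_N -> nat -> R) (G : nat -> nat -> R) :
  (forall i, G i 0%N = \sum_(k < N) a k * u k i) ->
  det3 G = \sum_(k < N) a k * det3 (fun i j => if j == 0%N then u k i else G i j).
Proof.
move=> HG.
have E : forall k, det3 (fun i j => if j == 0%N then u k i else G i j) =
  u k 0%N * (G 1 1 * G 2 2 - G 1 2 * G 2 1) + u k 1%N * (G 0 2 * G 2 1 - G 0 1 * G 2 2)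
  + u k 2%N * (G 0 1 * G 1 2 - G 0 2 * G 1 1).
  by move=> k; rewrite /det3 /=; ring.
under eq_bigr do rewrite E.
have -> : \sum_(k < N) a k * (u k 0%N * (G 1 1 * G 2 2 - G 1 2 * G 2 1) + u k 1%N * (G 0 2 * G 2 1 - G 0 1 * G 2 2)
  + u k 2%N * (G 0 1 * G 1 2 - G 0 2 * G 1 1)) =
  (\sum_(k < N) a k * u k 0%N) * (G 1 1 * G 2 2 - G 1 2 * G 2 1)
  + (\sum_(k < N) a k * u k 1%N) * (G 0 2 * G 2 1 - G 0 1 * G 2 2)
  + (\sum_(k < N) a k * u k 2%N) * (G 0 1 * G 1 2 - G 0 2 * G 1 1).
  by rewrite !mulr_suml -!big_split /=; apply: eq_bigr => k _; ring.
rewrite -!HG /det3; ring.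
Qed.

Lemma det3_lin1 N (a : 'I_N -> R) (u : 'I_N -> nat -> R) (G : nat -> nat -> R) :
  (forall i, G i 1%N = \sum_(k < N) a k * u k i) ->
  det3 G = \sum_(k < N) a k * det3 (fun i j => if j == 1%N then u k i else G i j).
Proof.
move=> HG.
have E : forall k, det3 (fun i j => if j == 1%N then u k i else G i j) =
  u k 0%N * (G 1 2 * G 2 0 - G 1 0 * G 2 2) + u k 1%N * (G 0 0 * G 2 2 - G 0 2 * G 2 0)
  + u k 2%N * (G 0 2 * G 1 0 - G 0 0 * G 1 2).
  by move=> k; rewrite /det3 /=; ring.
under eq_bigr do rewrite E.
have -> : \sum_(k < N) a k * (u k 0%N * (G 1 2 * G 2 0 - G 1 0 * G 2 2) + u k 1%N * (G 0 0 * G 2 2 - G 0 2 * G 2 0)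
  + u k 2%N * (G 0 2 * G 1 0 - G 0 0 * G 1 2)) =
  (\sum_(k < N) a k * u k 0%N) * (G 1 2 * G 2 0 - G 1 0 * G 2 2)
  + (\sum_(k < N) a k * u k 1%N) * (G 0 0 * G 2 2 - G 0 2 * G 2 0)
  + (\sum_(k < N) a k * u k 2%N) * (G 0 2 * G 1 0 - G 0 0 * G 1 2).
  by rewrite !mulr_suml -!big_split /=; apply: eq_bigr => k _; ring.
rewrite -!HG /det3; ring.
Qed.

Lemma det3_lin2 N (a : 'I_N -> R) (u : 'I_N -> nat -> R) (G : nat -> nat -> R) :
  (forall i, G i 2%N = \sum_(k < N) a k * u k i) ->
  det3 G = \sum_(k < N) a k * det3 (fun i j => if j == 2%N then u k i else G i j).
Proof.
move=> HG.
have E : forall k, det3 (fun i j => if j == 2%N then u k i else G i j) =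
  u k 0%N * (G 1 0 * G 2 1 - G 1 1 * G 2 0) + u k 1%N * (G 0 1 * G 2 0 - G 0 0 * G 2 1)
  + u k 2%N * (G 0 0 * G 1 1 - G 0 1 * G 1 0).
  by move=> k; rewrite /det3 /=; ring.
under eq_bigr do rewrite E.
have -> : \sum_(k < N) a k * (u k 0%N * (G 1 0 * G 2 1 - G 1 1 * G 2 0) + u k 1%N * (G 0 1 * G 2 0 - G 0 0 * G 2 1)
  + u k 2%N * (G 0 0 * G 1 1 - G 0 1 * G 1 0)) =
  (\sum_(k < N) a k * u k 0%N) * (G 1 0 * G 2 1 - G 1 1 * G 2 0)
  + (\sum_(k < N) a k * u k 1%N) * (G 0 1 * G 2 0 - G 0 0 * G 2 1)
  + (\sum_(k < N) a k * u k 2%N) * (G 0 0 * G 1 1 - G 0 1 * G 1 0).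
  by rewrite !mulr_suml -!big_split /=; apply: eq_bigr => k _; ring.
rewrite -!HG /det3; ring.
Qed.

Definition Gm (K : R -> nat -> R) (mu : nat -> R) (W : nat -> nat -> R) N i j :=
  \sum_(k < N) K (mu i) k * W j k.

Lemma Gm_ge0 K mu W N : (forall m k, 0 < m -> 0 <= K m k) ->
  (forall i, (i < 3)%N -> 0 < mu i) -> (forall j k, 0 <= W j k) ->
  forall i j, (i < 3)%N -> (j < 3)%N -> 0 <= Gm K mu W N i j.
Proof.
move=> HK Hmu HW i j hi hj; apply: sumr_ge0 => k _; apply: mulr_ge0; last exact: HW.
by apply: HK; apply: Hmu.
Qed.

Lemma Gm_minor K mu W N e2 : sr_order K 2 e2 ->
  (forall i, (i < 3)%N -> 0 < mu i) ->
  (forall i i', (i < i')%N -> (i' < 3)%N -> mu i < mu i') ->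
  (forall j k, 0 <= W j k) ->
  (forall j j' k k', (j < j')%N -> (j' < 3)%N -> W j k != 0 -> W j' k' != 0 -> (k < k')%N) ->
  forall i i' j j', (i < i')%N -> (i' < 3)%N -> (j < j')%N -> (j' < 3)%N ->
  0 <= e2 * minor2 (Gm K mu W N) i i' j j'.
Proof.
move=> HK Hmu0 Hmu HW0 HW i i' j j' hii' hi' hjj' hj'.
rewrite /minor2 /Gm !mulr_suml.
under eq_bigr do rewrite mulr_sumr.
under [X in _ - X]eq_bigr do rewrite mulr_sumr.
rewrite [X in _ - X]exchange_big -sumrB mulr_sumr; apply: sumr_ge0 => k _.
rewrite -sumrB mulr_sumr; apply: sumr_ge0 => k' _.
have -> : e2 * (K (mu i) k * W j k * (K (mu i') k' * W j' k') -
     K (mu i) k' * W j' k' * (K (mu i') k * W j k)) =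
   (W j k * W j' k') * (e2 * (K (mu i) k * K (mu i') k' - K (mu i) k' * K (mu i') k)) by ring.
have [->|nz] := eqVneq (W j k) 0; first by rewrite !mul0r.
have [->|nz'] := eqVneq (W j' k') 0; first by rewrite mulr0 !mul0r.
apply: mulr_ge0; first by apply: mulr_ge0.
apply: sr2_fact => //; first by apply: Hmu0; apply: ltn_trans hi'.
  by apply: Hmu.
exact: (HW j j').
Qed.

Lemma Gm_det K mu W N e3 : sr_order K 3 e3 ->
  (forall i, (i < 3)%N -> 0 < mu i) ->
  (forall i i', (i < i')%N -> (i' < 3)%N -> mu i < mu i') ->
  (forall j k, 0 <= W j k) ->
  (forall j j' k k', (j < j')%N -> (j' < 3)%N -> W j k != 0 -> W j' k' != 0 -> (k < k')%N) ->
  0 <= e3 * det3 (Gm K mu W N).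
Proof.
move=> HK Hmu0 Hmu HW0 HW.
rewrite (@det3_lin0 N (fun k => W 0%N k) (fun k i => K (mu i) k)); last first.
  by move=> i; rewrite /Gm; apply: eq_bigr => k _; rewrite mulrC.
rewrite mulr_sumr; apply: sumr_ge0 => k0 _.
have [->|nz0] := eqVneq (W 0%N k0) 0; first by rewrite mul0r mulr0.
rewrite mulrCA; apply: mulr_ge0; first exact: HW0.
rewrite (@det3_lin1 N (fun k => W 1%N k) (fun k i => K (mu i) k)); last first.
  by move=> i /=; rewrite /Gm; apply: eq_bigr => k _; rewrite mulrC.
rewrite mulr_sumr; apply: sumr_ge0 => k1 _.
have [->|nz1] := eqVneq (W 1%N k1) 0; first by rewrite mul0r mulr0.
rewrite mulrCA; apply: mulr_ge0; first exact: HW0.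
rewrite (@det3_lin2 N (fun k => W 2%N k) (fun k i => K (mu i) k)); last first.
  by move=> i /=; rewrite /Gm; apply: eq_bigr => k _; rewrite mulrC.
rewrite mulr_sumr; apply: sumr_ge0 => k2 _.
have [->|nz2] := eqVneq (W 2%N k2) 0; first by rewrite mul0r mulr0.
rewrite mulrCA; apply: mulr_ge0; first exact: HW0.
have -> : det3 (fun i j => if j == 2%N then K (mu i) k2 else
            (fun i j => if j == 1%N then K (mu i) k1 else
              (fun i j => if j == 0%N then K (mu i) k0 else Gm K mu W N i j) i j) i j) =
  det3 (fun i j => K (nth 0 [:: mu 0%N; mu 1%N; mu 2%N] i) (nth 0%N [:: val k0; val k1; val k2] j)).
  by rewrite /det3 /=.
apply: sr3_fact => //.
- exact: Hmu0.
- exact: Hmu.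
- exact: Hmu.
- exact: (HW 0%N 1%N).
- exact: (HW 1%N 2%N).
Qed.

Definition pcont (f : R -> R) := forall m : R, 0 < m -> forall e : R, 0 < e ->
  exists2 d : R, 0 < d & forall y : R, 0 < y -> `|y - m| < d -> `|f y - f m| < e.

Lemma pcont_below (f : R -> R) (m e u : R) : pcont f -> 0 < m -> 0 < e -> 0 <= u -> u < m ->
  exists v, [/\ u < v, v < m & f v < f m + e].
Proof.
move=> Hf m0 e0 u0 um; have [d d0 Hd] := Hf m m0 e e0.
have [M [hmin hle1 hle2]] : exists M : R, [/\ 0 < M, M <= d & M <= m - u].
  exists (Num.min d (m - u)); split; first by rewrite lt_min d0 subr_gt0.
    by rewrite ge_min lexx.
  by rewrite ge_min lexx orbT.
exists (m - M / 2); split; [lra|lra|].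
have H1 : `|m - M / 2 - m| < d by rewrite ltr_norml; apply/andP; split; lra.
have ypos : 0 < m - M / 2 by lra.
have := Hd _ ypos H1; rewrite ltr_norml => /andP[_ h]; lra.
Qed.

Lemma pcont_above (f : R -> R) (m e w : R) : pcont f -> 0 < m -> 0 < e -> m < w ->
  exists v, [/\ m < v, v < w & f v < f m + e].
Proof.
move=> Hf m0 e0 mw; have [d d0 Hd] := Hf m m0 e e0.
have [M [hmin hle1 hle2]] : exists M : R, [/\ 0 < M, M <= d & M <= w - m].
  exists (Num.min d (w - m)); split; first by rewrite lt_min d0 subr_gt0.
    by rewrite ge_min lexx.
  by rewrite ge_min lexx orbT.
exists (m + M / 2); split; [lra|lra|].
have H1 : `|m + M / 2 - m| < d by rewrite ltr_norml; apply/andP; split; lra.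
have ypos : 0 < m + M / 2 by lra.
have := Hd _ ypos H1; rewrite ltr_norml => /andP[_ h]; lra.
Qed.

Lemma qc_unimodal (f : R -> R) : pcont f ->
  (forall u v w : R, 0 < u -> u < v -> v < w -> ~ (f v < f u /\ f v < f w)) ->
  unimodal_pos f.
Proof.
move=> Hf Hq.
case: (pselect (forall u v : R, 0 < u -> u <= v -> f u <= f v)) => [Hmono|Hnm].
  exists 0; right; split; first by move=> u v u0 uv v0; lra.
  by move=> u v u0 _ uv; apply: Hmono.
have [uu [v0 [u00 u0v0 fuv0]]] : exists u0 v0 : R, [/\ 0 < u0, u0 < v0 & f v0 < f u0].
  apply: contra_notP Hnm => Hn u v u0 uv; rewrite leNgt; apply/negP => fvu.
  apply: Hn; exists u, v; split => //; rewrite lt_neqAle uv andbT.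
  by apply/eqP => e; move: fvu; rewrite e ltxx.
pose S := [set v : R | exists u : R, [/\ 0 < u, u < v & f v < f u]]%classic.
have S0 : S v0 by exists uu.
have Slb : lbound S 0 by move=> v [u [u0' uv _]]; apply: ltW; apply: lt_trans uv.
have hinf : has_inf S by split; [exists v0 | exists 0].
have Sge : forall v, S v -> inf S <= v by move=> v Sv; apply: (ge_inf hinf.2).
pose t := inf S.
have t0 : 0 <= t by apply: lb_le_inf => //; exists v0.
have key2 : forall u v, t < u -> u < v -> f v <= f u.
  move=> u v tu uv; rewrite leNgt; apply/negP => fuv.
  have tu0 : 0 < u - t by rewrite subr_gt0.
  have [v' [u' [u'0 u'v' fv'u']] v'lt] := inf_adherent tu0 hinf.
  rewrite -/t addrC subrK in v'lt.
  have h1 : f v <= f v'.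
    rewrite leNgt; apply/negP => h; apply: (Hq u' v' v) => //; exact: lt_trans uv.
  have h2 : f v' <= f u.
    rewrite leNgt; apply/negP => h; apply: (Hq v' u v) => //; exact: lt_trans u'v'.
  lra.
exists t; left; split.
  move=> u v u0 uv vt; rewrite leNgt; apply/negP => fvu.
  have uv' : u < v by rewrite lt_neqAle uv andbT; apply/eqP => e; move: fvu; rewrite e ltxx.
  case: (ltrP v t) => vt'.
    have : t <= v by apply: Sge; exists u.
    lra.
  have vt2 : v = t by apply: le_anti; rewrite vt vt'.
  rewrite vt2 in fvu uv'.
  have tpos : 0 < t by apply: lt_trans uv'.
  have ep : 0 < f u - f t by rewrite subr_gt0.
  have [w [uw wt fw]] := @pcont_below f t (f u - f t) u Hf tpos ep (ltW u0) uv'.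
  have : t <= w by apply: Sge; exists u; split => //; lra.
  lra.
move=> u v u0 tu uv.
case: (ltrP t u) => tu'; first by case: (ltrP u v) => uv'; [apply: key2 | have -> : v = u by apply: le_anti; rewrite uv uv'].
have ut : u = t by apply: le_anti; rewrite tu tu'.
rewrite leNgt; apply/negP => fuv.
have uv' : u < v by rewrite lt_neqAle uv andbT; apply/eqP => e; move: fuv; rewrite e ltxx.
have ep : 0 < f v - f u by rewrite subr_gt0.
have [w [uw wv fw]] := @pcont_above f u (f v - f u) v Hf u0 ep uv'.
have : f v <= f w by apply: key2 => //; rewrite -ut.
lra.
Qed.
Local Open Scope classical_set_scope.

Lemma ev_ex (P : nat -> Prop) : (\forall n \near \oo, P n) -> exists N, forall n, (N <= n)%N -> P n.
Proof. case=> N _ HN; exists N => n hn; exact: HN. Qed.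
Arguments ev_ex {P}.

Lemma ex_ev (P : nat -> Prop) N : (forall n, (N <= n)%N -> P n) -> \forall n \near \oo, P n.
Proof. by move=> H; exists N. Qed.

Lemma cvg_ed (f : R -> R) (m0 : R) : f x @[x --> m0] --> f m0 ->
  forall e : R, 0 < e -> exists2 d : R, 0 < d & forall y : R, `|y - m0| < d -> `|f y - f m0| < e.
Proof.
move/cvgrPdist_lt => H e e0; have := H e e0.
case/nbhs_ballP => d d0 Hb; exists d => // y hy.
rewrite distrC; apply: Hb. rewrite /ball /= distrC //.
Qed.

Lemma cvg_sum_ord N (g : nat -> R -> R) (m0 : R) :
  (forall k, g k x @[x --> m0] --> g k m0) ->
  (\sum_(k < N) g k x) @[x --> m0] --> \sum_(k < N) g k m0.
Proof.
move=> H; elim: N => [|N IH].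
  under eq_cvg do rewrite big_ord0.
  by rewrite big_ord0; exact: cvg_cst.
under eq_cvg do rewrite big_ord_recr.
rewrite big_ord_recr; apply: cvgD => //; exact: H.
Qed.

Lemma cvg_prod_seq (I : Type) (r : seq I) (g : I -> R -> R) (m0 : R) :
  (forall k, g k x @[x --> m0] --> g k m0) ->
  (\prod_(k <- r) g k x) @[x --> m0] --> \prod_(k <- r) g k m0.
Proof.
move=> H; elim: r => [|i r IH].
  under eq_cvg do rewrite big_nil.
  by rewrite big_nil; exact: cvg_cst.
under eq_cvg do rewrite big_cons.
rewrite big_cons; apply: cvgM => //; exact: H.
Qed.

Lemma series_le_lim (u : nat -> R) n : (forall k, 0 <= u k) -> cvgn (series u) ->
  series u n <= limn (series u).
Proof.
move=> Hu cu; apply: nondecreasing_cvgn_le => //.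
apply/nondecreasing_seqP => k; rewrite /series /= big_nat_recr //= lerDl; exact: Hu.
Qed.

Lemma tail_cmp (u w : nat -> R) N : (forall k, 0 <= u k) -> (forall k, u k <= w k) ->
  cvgn (series u) -> cvgn (series w) ->
  limn (series u) - series u N <= limn (series w) - series w N.
Proof.
move=> Hu Huw cu cw.
have Hw : forall k, 0 <= w k by move=> k; apply: le_trans (Huw k).
suff : limn (series u) <= series u N + (limn (series w) - series w N) by lra.
apply: limr_le => //; apply: (@ex_ev _ N) => n hn /=.
have : series w n <= limn (series w) by apply: series_le_lim.
rewrite /series /= (@big_cat_nat _ _ _ N 0 n) // (@big_cat_nat _ _ _ N 0 n) //=.
have : \sum_(N <= k < n) u k <= \sum_(N <= k < n) w k by apply: ler_sum => k _.
lra.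
Qed.

Lemma tail_small (w : nat -> R) : cvgn (series w) -> forall e : R, 0 < e ->
  exists N, limn (series w) - series w N < e.
Proof.
move=> cw e e0; have := (proj1 (cvgrPdist_lt _ _) cw) e e0.
move=> H; have [N HN] := ev_ex (H eventually_filter); exists N; apply: le_lt_trans (HN N (leqnn N)); exact: ler_norm.
Qed.

Lemma seriesE (u : nat -> R) n : series u n = \sum_(k < n) u k.
Proof. by rewrite /series /= big_mkord. Qed.

Lemma tri_bound (a b c d X e : R) : `|c - d| < e / 3 -> 0 <= a - c <= X -> 0 <= b - d <= X ->
  X < e / 3 -> `|a - b| < e.
Proof.
move=> h /andP [h1 h2] /andP [h3 h4] hX.
have -> : a - b = (c - d) + ((a - c) - (b - d)) by ring.
apply: le_lt_trans (ler_normD _ _) _.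
have : `|a - c - (b - d)| < e / 3 by rewrite ltr_norml; apply/andP; split; lra.
lra.
Qed.

Lemma series_cont (K : R -> nat -> R) (A : nat -> R) (e2 : R) :
  (e2 = 1 \/ e2 = -1) ->
  (forall m k, 0 < m -> 0 <= K m k) -> (forall k, 0 <= A k) ->
  (forall k m m', 0 < m -> m < m' -> 0 <= e2 * (K m' k - K m k)) ->
  (forall k (m : R), 0 < m -> K x k @[x --> m] --> K m k) ->
  (forall m, 0 < m -> cvgn (series (fun k => K m k * A k))) ->
  pcont (fun m => limn (series (fun k => K m k * A k))).
Proof.
move=> He2 HK HA Hmon Hc Hcv m0 m00 e e0.
have ma0 : 0 < m0 / 2 by lra.
have mb0 : 0 < m0 * 2 by lra.
have bound : forall m k, m0 / 2 <= m -> m <= m0 * 2 -> K m k <= K (m0 / 2) k + K (m0 * 2) k.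
  move=> m k h1 h2.
  have Ka := HK (m0 / 2) k ma0; have Kb := HK (m0 * 2) k mb0.
  have m0' : 0 < m by apply: lt_le_trans h1.
  case: He2 => He2.
    suff : K m k <= K (m0 * 2) k by lra.
    case: (ltrP m (m0 * 2)) => hm; last by have -> : m = m0 * 2 by apply: le_anti; rewrite h2 hm.
    by have := Hmon k m (m0 * 2) m0' hm; rewrite He2 mul1r subr_ge0.
  suff : K m k <= K (m0 / 2) k by lra.
  case: (ltrP (m0 / 2) m) => hm; last by have -> : m = m0 / 2 by apply: le_anti; rewrite h1 hm.
  by have := Hmon k (m0 / 2) m ma0 hm; rewrite He2 mulN1r oppr_ge0 subr_le0.
pose U k := (K (m0 / 2) k + K (m0 * 2) k) * A k.
have cU : cvgn (series U).
  have -> : U = (fun k => K (m0 / 2) k * A k) + (fun k => K (m0 * 2) k * A k).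
    by apply/funext => k; rewrite /U mulrDl.
  by apply: is_cvg_seriesD; apply: Hcv.
have e3 : 0 < e / 3 by lra.
have [N HN] := @tail_small U cU _ e3.
have cP : (\sum_(k < N) K x k * A k) @[x --> m0] --> \sum_(k < N) K m0 k * A k.
  apply: (@cvg_sum_ord N (fun k x => K x k * A k)) => k.
  by apply: cvgM; [exact: Hc | exact: cvg_cst].
have [d1 d10 Hd1] := @cvg_ed (fun x => \sum_(k < N) K x k * A k) m0 cP _ e3.
exists (Num.min d1 (m0 / 2)); first by rewrite lt_min d10 ma0.
move=> y y0 hy.
have hy1 : `|y - m0| < d1 by apply: lt_le_trans hy _; rewrite ge_min lexx.
have hy2 : `|y - m0| < m0 / 2 by apply: lt_le_trans hy _; rewrite ge_min lexx orbT.
move: hy2; rewrite ltr_norml => /andP [hy2a hy2b].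
have tail_bd : forall m, m0 / 2 <= m -> m <= m0 * 2 ->
    0 <= limn (series (fun k => K m k * A k)) - \sum_(k < N) K m k * A k <= limn (series U) - series U N.
  move=> m h1 h2; have m0' : 0 < m by apply: lt_le_trans h1.
  have Hu : forall k, 0 <= K m k * A k by move=> k; apply: mulr_ge0; [exact: HK|exact: HA].
  apply/andP; split.
    rewrite subr_ge0 -(seriesE (fun k => K m k * A k)); exact: (@series_le_lim _ N Hu (Hcv m m0')).
  rewrite -(seriesE (fun k => K m k * A k)); apply: (@tail_cmp _ U N Hu _ (Hcv m m0') cU).
  by move=> k; rewrite /U; apply: ler_wpM2r => //; apply: bound.
have := tail_bd y ltac:(lra) ltac:(lra).
have := tail_bd m0 ltac:(lra) ltac:(lra).
have := Hd1 y hy1.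
move=> hP /andP [t0a t0b] /andP [tya tyb].
apply: (@tri_bound _ _ (\sum_(k<N) K y k * A k) (\sum_(k<N) K m0 k * A k) (limn (series U) - series U N) e).
- exact: hP.
- by rewrite tya tyb.
- by rewrite t0a t0b.
- exact: HN.
Qed.

Definition Kf (c d : seq R) (m : R) (n : nat) := vpoch (vshift c m) n / vpoch (vshift d m) n.

Lemma vpoch0 (s : seq R) : vpoch s 0 = 1.
Proof. by rewrite /vpoch big1 // => y _; rewrite /poch big_ord0. Qed.

Lemma Kf0 c d m : Kf c d m 0 = 1.
Proof. by rewrite /Kf !vpoch0 divr1. Qed.

Lemma vpoch_shift_cvg (c : seq R) k (m : R) :
  vpoch (vshift c x) k @[x --> m] --> vpoch (vshift c m) k.
Proof.
rewrite /vpoch /vshift big_map.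
under eq_cvg do rewrite big_map.
apply: (@cvg_prod_seq _ c (fun ci x => poch (ci + x) k)) => ci.
rewrite /poch; apply: (@cvg_prod_seq _ _ (fun (i : 'I_k) x => ci + x + i%:R)) => i.
apply: cvgD; last exact: cvg_cst.
apply: cvgD; [exact: cvg_cst | exact: cvg_id].
Qed.

Lemma Kf_cont c d k (m : R) : vpoch (vshift d m) k != 0 ->
  Kf c d x k @[x --> m] --> Kf c d m k.
Proof.
move=> hd; rewrite /Kf; apply: cvgM; first exact: vpoch_shift_cvg.
apply: cvgV => //; exact: vpoch_shift_cvg.
Qed.

Lemma sr1_nonneg (K : R -> nat -> R) e1 : sr_order K 1 e1 -> (e1 = 1 \/ e1 = -1) ->
  (forall m, 0 < m -> K m 0 = 1) -> forall m k, 0 < m -> 0 <= K m k.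
Proof.
move=> H He1 H0 m k m0.
have key : forall k, 0 <= e1 * K m k.
  move=> k'; have := H (fun _ => m) (fun _ => k') (fun _ => m0).
  rewrite det_mx11 mxE; apply.
  - by move=> [[|]] // ? [[|]].
  - by move=> [[|]] // ? [[|]].
have := key 0%N; rewrite H0 // mulr1 => he1.
case: He1 => he; last by move: he1; rewrite he oppr_ge0 ler10.
by have := key k; rewrite he mul1r.
Qed.

Lemma pcont_cvg (f : R -> R) (m : R) : pcont f -> 0 < m -> f x @[x --> m] --> f m.
Proof.
move=> Hf m0; apply/cvgrPdist_lt => e e0.
have [d d0 Hd] := Hf m m0 e e0.
apply/nbhs_ballP; exists (Num.min d m); first by rewrite /= lt_min d0 m0.
move=> y; rewrite /ball /= => hy; rewrite distrC.
have h1 : `|m - y| < d by apply: lt_le_trans hy _; rewrite ge_min lexx.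
have h2 : `|m - y| < m by apply: lt_le_trans hy _; rewrite ge_min lexx orbT.
apply: Hd; last by rewrite distrC.
move: h2; rewrite ltr_norml => /andP [_ h]; lra.
Qed.

Lemma cvg_pcont (f : R -> R) : (forall m : R, 0 < m -> f x @[x --> m] --> f m) -> pcont f.
Proof.
move=> H m m0 e e0; have [d d0 Hd] := @cvg_ed f m (H m m0) e e0.
by exists d => // y _; apply: Hd.
Qed.

Lemma unimodal_scale (f : R -> R) (sg : R) : (sg = 1 \/ sg = -1) ->
  unimodal_pos (fun m => sg * f m) -> unimodal_pos f.
Proof.
case=> ->; case=> t [[H1 H2]|[H1 H2]].
- by exists t; left; split => u v *; [move: (H1 u v); rewrite !mul1r; apply | move: (H2 u v); rewrite !mul1r; apply].
- by exists t; right; split => u v *; [move: (H1 u v); rewrite !mul1r; apply | move: (H2 u v); rewrite !mul1r; apply].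
- exists t; right; split => u v *.
    by move: (H1 u v); rewrite !mulN1r lerN2; apply.
  by move: (H2 u v); rewrite !mulN1r lerN2; apply.
- exists t; left; split => u v *.
    by move: (H1 u v); rewrite !mulN1r lerN2; apply.
  by move: (H2 u v); rewrite !mulN1r lerN2; apply.
Qed.

Lemma ev_pos (u : nat -> R) (l : R) : u @ \oo --> l -> 0 < l -> exists N, forall n, (N <= n)%N -> 0 < u n.
Proof.
move=> H l0; have := (proj1 (cvgrPdist_lt _ _) H) l l0.
move=> H'; have [N HN] := ev_ex (H' eventually_filter); exists N => n hn.
have := HN n hn; rewrite ltr_norml => /andP [_ h]; lra.
Qed.

Definition Wf (N : nat) (J1 J2 : nat -> bool) (h : nat -> R) (j k : nat) : R :=
  if (k < N)%N then
    (if j == 0%N then (if J1 k && ~~ J2 k then - h k else 0)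
     else if j == 1%N then (if J2 k then h k else 0)
     else (if ~~ J2 k && ~~ J1 k then - h k else 0))
  else 0.

Lemma vrow_Wf (K : R -> nat -> R) mu N J1 J2 h i :
  vrow (Gm K mu (Wf N J1 J2 h) N) i = \sum_(k < N) K (mu i) k * h k.
Proof.
rewrite /vrow /Gm -!sumrN -!big_split /=; apply: eq_bigr => k _.
rewrite /Wf ltn_ord /=; case: (J1 k); case: (J2 k) => /=; ring.
Qed.

Lemma Wf_ge0 N J1 J2 h : (forall k, J2 k = (0 < h k)) -> forall j k, 0 <= Wf N J1 J2 h j k.
Proof.
move=> HJ j k; rewrite /Wf; case: ifP => // _.
case: ifP => _; last case: ifP => _.
- by case: ifP => // /andP [_]; rewrite HJ -leNgt oppr_ge0.
- by case: ifP => //; rewrite HJ => /ltW.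
- by case: ifP => // /andP [h1 _]; move: h1; rewrite HJ -leNgt oppr_ge0.
Qed.

Lemma Wf_order (N : nat) (J2 : nat -> bool) (h : nat -> R) :
  (forall i j l, (i <= j)%N -> (j <= l)%N -> J2 i -> J2 l -> J2 j) ->
  forall j j' k k' : nat, (j < j')%N -> (j' < 3)%N ->
  Wf N (fun q => has (fun q' => (q < q')%N && J2 q') (iota 0 N)) J2 h j k != 0 ->
  Wf N (fun q => has (fun q' => (q < q')%N && J2 q') (iota 0 N)) J2 h j' k' != 0 -> (k < k')%N.
Proof.
move=> Hnd j j' k k' hjj' hj'.
rewrite /Wf; case: (ltnP k N) => hkN; last by rewrite eqxx.
case: (ltnP k' N) => hk'N; last by rewrite eqxx.
case: j' hjj' hj' => [|[|[|//]]] //.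
-
  case: j => // _ _ /=.
  case: ifP => [/andP [/hasP [k'' hk'' /andP [kk'' J2k'']] nJ2k] _ | _]; last by rewrite eqxx.
  case: ifP => [J2k' _|_]; last by rewrite eqxx.
  rewrite ltnNge; apply/negP => hk'k.
  by move: nJ2k; rewrite (Hnd k' k k'') // ltnW.
-
  move=> hj _ /= hWk.
  case: ifP => [/andP [nJ2k' /hasP H] _|_]; last by rewrite eqxx.
  have nH : forall k'', k'' \in iota 0 N -> ~~ ((k' < k'')%N && J2 k'').
    by move=> k'' hk''; apply/negP => hh; apply: H; exists k''.
  case: j hj hWk => [|[|//]] _ /=.
  + case: ifP => [/andP [/hasP [k'' hk'' /andP [kk'' J2k'']] _] _ | _]; last by rewrite eqxx.
    have := nH k'' hk''; rewrite J2k'' andbT -leqNgt => hk''k'.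
    exact: leq_trans kk'' hk''k'.
  + case: ifP => [J2k _|_]; last by rewrite eqxx.
    have hk : k \in iota 0 N by rewrite mem_iota.
    have := nH k hk; rewrite J2k andbT -leqNgt leq_eqVlt => /orP [/eqP e|//].
    by move: nJ2k'; rewrite -e J2k.
Qed.

Lemma main_sign (K : R -> nat -> R) (A B : nat -> R) (a b : seq R) (e2 e3 : R) :
  (e2 = 1 \/ e2 = -1) -> (e3 = 1 \/ e3 = -1) ->
  sr_order K 2 e2 -> sr_order K 3 e3 ->
  (forall m k, 0 < m -> 0 <= K m k) ->
  (forall k, 0 < A k) -> (forall k, 0 < B k) ->
  (forall k, A k / B k = rr a b k) ->
  all (fun y => 0 < y) a -> all (fun y => 0 < y) b -> (size a <= size b)%N ->
  (forall k : nat, (k < size a)%N ->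
     elem_sym b (size b - k) / elem_sym a (size a - k)
     <= elem_sym b (size b - k.+1) / elem_sym a (size a - k.+1)) ->
  (forall m, 0 < m -> cvgn (series (fun k => K m k * A k))) ->
  (forall m, 0 < m -> cvgn (series (fun k => K m k * B k))) ->
  (forall m, 0 < m -> 0 < limn (series (fun k => K m k * B k))) ->
  forall m0 m1 m2 : R, 0 < m0 -> m0 < m1 -> m1 < m2 ->
  ~ (e2 * e3 * (limn (series (fun k => K m1 k * A k)) / limn (series (fun k => K m1 k * B k)))
       < e2 * e3 * (limn (series (fun k => K m0 k * A k)) / limn (series (fun k => K m0 k * B k))) /\
     e2 * e3 * (limn (series (fun k => K m1 k * A k)) / limn (series (fun k => K m1 k * B k)))
       < e2 * e3 * (limn (series (fun k => K m2 k * A k)) / limn (series (fun k => K m2 k * B k)))).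
Proof.
move=> He2 He3 S2 S3 Kp Ap Bp AB Ha Hb hab Hr cA cB Dp m0 m1 m2 h0 h01 h12.
pose F := fun m => limn (series (fun k => K m k * A k)) / limn (series (fun k => K m k * B k)).
rewrite -/(F m0) -/(F m1) -/(F m2) => -[hd0 hd2].
set sg := e2 * e3.
have sg2 : sg * sg = 1 by rewrite /sg; case: He2 => ->; case: He3 => ->; ring.
pose mu := fun i : nat => nth 0 [:: m0; m1; m2] i.
have mupos : forall i, (i < 3)%N -> 0 < mu i by case=> [|[|[|]]] //= _; rewrite /mu /=; lra.
have muinc : forall i i', (i < i')%N -> (i' < 3)%N -> mu i < mu i'.
  by move=> [|[|[|i]]] [|[|[|i']]] //= _ _; rewrite /mu /=; lra.
pose Nm i := limn (series (fun k => K (mu i) k * A k)).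
pose Dm i := limn (series (fun k => K (mu i) k * B k)).
pose lam' := (sg * F m1 + Num.min (sg * F m0) (sg * F m2)) / 2.
pose lam := sg * lam'.
have hmin : sg * F m1 < Num.min (sg * F m0) (sg * F m2) by rewrite lt_min hd0 hd2.
have hm0 : Num.min (sg * F m0) (sg * F m2) <= sg * F m0 by rewrite ge_min lexx.
have hm2 : Num.min (sg * F m0) (sg * F m2) <= sg * F m2 by rewrite ge_min lexx orbT.
have hl1 : sg * F m1 < lam' by rewrite /lam'; lra.
have hl0 : lam' < sg * F m0 by rewrite /lam'; lra.
have hl2 : lam' < sg * F m2 by rewrite /lam'; lra.
have key : forall i, (i < 3)%N -> sg * (Nm i - lam * Dm i) = Dm i * (sg * F (mu i) - lam').
  move=> i hi; have hD := Dp (mu i) (mupos i hi).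
  have -> : sg * (Nm i - lam * Dm i) = sg * Nm i - (sg * sg) * lam' * Dm i by rewrite /lam; ring.
  rewrite sg2 /F -/(Nm i) -/(Dm i); field; exact: lt0r_neq0.
have v0 : 0 < sg * (Nm 0%N - lam * Dm 0%N).
  rewrite key //; apply: mulr_gt0; [apply: Dp; exact: mupos | rewrite subr_gt0 //].
have v1 : 0 < - sg * (Nm 1%N - lam * Dm 1%N).
  rewrite mulNr key // -mulrN; apply: mulr_gt0; [apply: Dp; exact: mupos | rewrite oppr_gt0 subr_lt0 //].
have v2 : 0 < sg * (Nm 2%N - lam * Dm 2%N).
  rewrite key //; apply: mulr_gt0; [apply: Dp; exact: mupos | rewrite subr_gt0 //].
have cvu : forall (sc : R) i, (i < 3)%N ->
    (fun n => sc * (series (fun k => K (mu i) k * A k) n - lam * series (fun k => K (mu i) k * B k) n))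
      @ \oo --> sc * (Nm i - lam * Dm i).
  move=> sc i hi; apply: cvgM; first exact: cvg_cst.
  apply: cvgB; first exact: (cA _ (mupos i hi)).
  apply: cvgM; first exact: cvg_cst.
  exact: (cB _ (mupos i hi)).
have [N0 HN0] := @ev_pos (fun n => sg * (series (fun k => K (mu 0%N) k * A k) n - lam * series (fun k => K (mu 0%N) k * B k) n)) _ (cvu sg 0%N isT) v0.
have [N1 HN1] := @ev_pos (fun n => - sg * (series (fun k => K (mu 1%N) k * A k) n - lam * series (fun k => K (mu 1%N) k * B k) n)) _ (cvu (- sg) 1%N isT) v1.
have [N2 HN2] := @ev_pos (fun n => sg * (series (fun k => K (mu 2%N) k * A k) n - lam * series (fun k => K (mu 2%N) k * B k) n)) _ (cvu sg 2%N isT) v2.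
pose N := maxn N0 (maxn N1 N2).
pose J2 := fun k => lam * B k < A k.
pose h := fun k => A k - lam * B k.
have HJ : forall k, J2 k = (0 < h k) by move=> k; rewrite /J2 /h subr_gt0.
have J2rr : forall k, J2 k = (lam < rr a b k) by move=> k; rewrite /J2 -AB ltr_pdivlMr.
have nodip : forall i j l, (i <= j)%N -> (j <= l)%N -> J2 i -> J2 l -> J2 j.
  move=> i j l hij hjl; rewrite !J2rr => Ji Jl; rewrite ltNge; apply/negP => hj.
  case: (ltrP (rr a b j) (rr a b i)) => hji.
    have := @rr_nodip a b i j l Ha Hb hab Hr hij hjl hji; lra.
  lra.
pose W := Wf N (fun q => has (fun q' => (q < q')%N && J2 q') (iota 0 N)) J2 h.
pose G := Gm K mu W N.
have vrowE : forall i, vrow G i =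
    series (fun k => K (mu i) k * A k) N - lam * series (fun k => K (mu i) k * B k) N.
  move=> i; rewrite /G /W vrow_Wf !seriesE mulr_sumr -sumrB; apply: eq_bigr => k _.
  by rewrite /h; ring.
have HW0 := @Wf_ge0 N (fun q => has (fun q' => (q < q')%N && J2 q') (iota 0 N)) J2 h HJ.
apply: (@no_pattern G e2 e3 sg He2 He3 erefl).
- move=> i j hi hj; apply: Gm_ge0 => //; exact: mupos.
- move=> i i' j j' *; apply: Gm_minor => //; exact: Wf_order.
- apply: Gm_det => //; exact: Wf_order.
- rewrite vrowE; apply: HN0; exact: leq_maxl.
- rewrite vrowE -oppr_gt0 -mulNr; apply: HN1.
  by rewrite /N (leq_trans (leq_maxl N1 N2)) // leq_maxr.
- rewrite vrowE; apply: HN2.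
  by rewrite /N (leq_trans (leq_maxr N1 N2)) // leq_maxr.
Qed.

Lemma theorem5_aux (c d a1 a2 b1 b2 : seq R) (x : R) :
  sign_regular3 (fun mu n => vpoch (vshift c mu) n / vpoch (vshift d mu) n) ->
  (forall mu : R, 0 < mu -> forall k : nat, vpoch (vshift d mu) k != 0) ->
  all (fun y => 0 < y) a1 -> all (fun y => 0 < y) a2 ->
  all (fun y => 0 < y) b1 -> all (fun y => 0 < y) b2 ->
  0 < x ->
  (forall mu : R, 0 < mu ->
     hypconv (vshift c mu ++ a1) (vshift d mu ++ b1) x) ->
  (forall mu : R, 0 < mu ->
     hypconv (vshift c mu ++ b2) (vshift d mu ++ a2) x) ->
  (forall mu : R, 0 < mu ->
     hypF (vshift c mu ++ b2) (vshift d mu ++ a2) x != 0) ->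
  (size (a1 ++ a2) <= size (b1 ++ b2))%N ->
  (forall k : nat, (k < size (a1 ++ a2))%N ->
     elem_sym (b1 ++ b2) (size (b1 ++ b2) - k) / elem_sym (a1 ++ a2) (size (a1 ++ a2) - k)
     <= elem_sym (b1 ++ b2) (size (b1 ++ b2) - k.+1)
        / elem_sym (a1 ++ a2) (size (a1 ++ a2) - k.+1)) ->
  unimodal_pos (fun mu : R =>
     hypF (vshift c mu ++ a1) (vshift d mu ++ b1) x
     / hypF (vshift c mu ++ b2) (vshift d mu ++ a2) x).
Proof.
move=> [e1 [e2 [e3 [He1 He2 He3 [S1 S2 S3]]]]] Hd Ha1 Ha2 Hb1 Hb2 x0 Hcn Hcd Hnz hsz Hr.
change (sr_order (Kf c d) 1 e1) in S1.
change (sr_order (Kf c d) 2 e2) in S2.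
change (sr_order (Kf c d) 3 e3) in S3.
pose A := fun k => vpoch a1 k / vpoch b1 k * x ^+ k / (k`!)%:R.
pose B := fun k => vpoch b2 k / vpoch a2 k * x ^+ k / (k`!)%:R.
have EN : forall m, hypterm (vshift c m ++ a1) (vshift d m ++ b1) x = (fun k => Kf c d m k * A k).
  by move=> m; apply/funext => k; rewrite /hypterm /Kf /A !vpoch_cat !invfM; ring.
have ED : forall m, hypterm (vshift c m ++ b2) (vshift d m ++ a2) x = (fun k => Kf c d m k * B k).
  by move=> m; apply/funext => k; rewrite /hypterm /Kf /B !vpoch_cat !invfM; ring.
have HF : (fun mu : R => hypF (vshift c mu ++ a1) (vshift d mu ++ b1) x
     / hypF (vshift c mu ++ b2) (vshift d mu ++ a2) x) =
   (fun m => limn (series (fun k => Kf c d m k * A k)) / limn (series (fun k => Kf c d m k * B k))).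
  by apply/funext => m; rewrite /hypF EN ED.
rewrite HF.
have Kpos := @sr1_nonneg (Kf c d) e1 S1 He1 (fun m _ => Kf0 c d m).
have fact0 : forall k, (0 < (k`!)%:R :> R) by move=> k; rewrite ltr0n fact_gt0.
have Ap : forall k, 0 < A k.
  move=> k; rewrite /A; apply: divr_gt0 (fact0 k); apply: mulr_gt0; last exact: exprn_gt0.
  by apply: divr_gt0; exact: vpoch_gt0.
have Bp : forall k, 0 < B k.
  move=> k; rewrite /B; apply: divr_gt0 (fact0 k); apply: mulr_gt0; last exact: exprn_gt0.
  by apply: divr_gt0; exact: vpoch_gt0.
have AB : forall k, A k / B k = rr (a1 ++ a2) (b1 ++ b2) k.
  move=> k; rewrite /A /B /rr !vpoch_cat.
  have h1 := vpoch_gt0 a1 k Ha1; have h2 := vpoch_gt0 a2 k Ha2.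
  have h3 := vpoch_gt0 b1 k Hb1; have h4 := vpoch_gt0 b2 k Hb2.
  have h5 := fact0 k; have h6 : 0 < x ^+ k by exact: exprn_gt0.
  field; rewrite ?gt_eqF //.
have Hmon : forall k m m', 0 < m -> m < m' -> 0 <= e2 * (Kf c d m' k - Kf c d m k).
  move=> k m m' h0 h1; case: k => [|k]; first by rewrite !Kf0 subrr mulr0.
  by have := @sr2_fact (Kf c d) e2 S2 m m' 0 k.+1 h0 h1 (ltn0Sn k); rewrite !Kf0 mul1r mulr1.
have cN : forall m, 0 < m -> cvgn (series (fun k => Kf c d m k * A k)).
  by move=> m m0; rewrite -EN; exact: Hcn.
have cD : forall m, 0 < m -> cvgn (series (fun k => Kf c d m k * B k)).
  by move=> m m0; rewrite -ED; exact: Hcd.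
have Kc : forall k (m : R), 0 < m -> Kf c d x k @[x --> m] --> Kf c d m k.
  by move=> k m m0; apply: Kf_cont; exact: Hd.
have pN := @series_cont (Kf c d) A e2 He2 Kpos (fun k => ltW (Ap k)) Hmon Kc cN.
have pD := @series_cont (Kf c d) B e2 He2 Kpos (fun k => ltW (Bp k)) Hmon Kc cD.
have Dp : forall m, 0 < m -> 0 < limn (series (fun k => Kf c d m k * B k)).
  move=> m m0.
  have Hu : forall k, 0 <= Kf c d m k * B k by move=> k; apply: mulr_ge0; [exact: Kpos | exact: ltW].
  apply: lt_le_trans (@series_le_lim _ 1 Hu (cD m m0)).
  by rewrite seriesE big_ord1 Kf0 mul1r.
pose sg := e2 * e3.
have Hsg : sg = 1 \/ sg = -1.
  by rewrite /sg; case: He2 => ->; case: He3 => ->; [left|right|right|left]; ring.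
apply: (@unimodal_scale _ sg Hsg); apply: qc_unimodal.
  apply: cvg_pcont => m m0; apply: cvgM; first exact: cvg_cst.
  apply: cvgM; first exact: (@pcont_cvg (fun m => limn (series (fun k => Kf c d m k * A k))) m pN m0).
  apply: cvgV; first exact: lt0r_neq0 (Dp m m0).
  exact: (@pcont_cvg (fun m => limn (series (fun k => Kf c d m k * B k))) m pD m0).
move=> u v w u0 uv vw.
have Ha : all (fun y => 0 < y) (a1 ++ a2) by rewrite all_cat Ha1 Ha2.
have Hb : all (fun y => 0 < y) (b1 ++ b2) by rewrite all_cat Hb1 Hb2.
exact: (@main_sign (Kf c d) A B (a1 ++ a2) (b1 ++ b2) e2 e3 He2 He3 S2 S3 Kpos Ap Bp AB
   Ha Hb hsz Hr cN cD Dp u v w u0 uv vw).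
Qed.
End Main.

Theorem theorem5 (R : realType) (c d a1 a2 b1 b2 : seq R) (x : R) :
  sign_regular3 (fun mu n => vpoch (vshift c mu) n / vpoch (vshift d mu) n) ->
  (forall mu : R, 0 < mu -> forall k : nat, vpoch (vshift d mu) k != 0) ->
  all (fun y => 0 < y) a1 -> all (fun y => 0 < y) a2 ->
  all (fun y => 0 < y) b1 -> all (fun y => 0 < y) b2 ->
  0 < x ->
  (forall mu : R, 0 < mu ->
     hypconv (vshift c mu ++ a1) (vshift d mu ++ b1) x) ->
  (forall mu : R, 0 < mu ->
     hypconv (vshift c mu ++ b2) (vshift d mu ++ a2) x) ->
  (forall mu : R, 0 < mu ->
     hypF (vshift c mu ++ b2) (vshift d mu ++ a2) x != 0) ->
  (size (a1 ++ a2) <= size (b1 ++ b2))%N ->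
  (forall k : nat, (k < size (a1 ++ a2))%N ->
     elem_sym (b1 ++ b2) (size (b1 ++ b2) - k) / elem_sym (a1 ++ a2) (size (a1 ++ a2) - k)
     <= elem_sym (b1 ++ b2) (size (b1 ++ b2) - k.+1)
        / elem_sym (a1 ++ a2) (size (a1 ++ a2) - k.+1)) ->
  unimodal_pos (fun mu : R =>
     hypF (vshift c mu ++ a1) (vshift d mu ++ b1) x
     / hypF (vshift c mu ++ b2) (vshift d mu ++ a2) x).
Proof. exact: theorem5_aux. Qed.
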